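(* For all integers $q\ge 2$ and $m\ge 1$, the fractal star matrix $M_{q,m}$ is the star matrix of a partition of the hypercube ${\bf Z}_q^{(q^m-1)/(q-1)}$ into $q^m$ subcubes, each of dimension $\frac{q^m-1}{q-1}-m$.
   Context: A subcube of ${\bf Z}_q^n$ is obtained by fixing some coordinates and letting the others run through ${\bf Z}_q$; its star pattern is the vector over ${\bf Z}_q\cup\{*\}$ with the fixed values in fixed coordinates and $*$ in free ones. A matrix over ${\bf Z}_q\cup\{*\}$ is the star matrix of a partition if its rows are the star patterns of the subcubes of a partition of ${\bf Z}_q^n$ (each vector in exactly one subcube). The fractal matrices $M_{q,m}$ are defined recursively: $M_{q,0}$ has one row and zero columns; for $m\ge1$, $M_{q,m}$ consists of $q$ horizontal blocks indexed by $a=0,1,\dots,q-1$, each block having $q^{m-1}$ rows; the first column of $M_{q,m}$ has the entry $a$ in every row of block $a$; the remaining columns are divided into $q$ vertical stripes, each of width equal to the number of columns of $M_{q,m-1}$, and in block $a$ the $a$-th vertical stripe (counting from $0$) is a copy of $M_{q,m-1}$ while all other stripes of block $a$ consist only of $*$. *)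

(* Defs.v *)
From mathcomp Require Import all_boot.
Set Implicit Arguments. Unset Strict Implicit. Unset Printing Implicit Defensive.

(* Z_q is represented by 'I_q (we always assume q >= 2).
   An entry of a star matrix is an [option 'I_q]: [Some a] = fixed value a,
   [None] = the star symbol *.  A star matrix is a list of rows. *)
Definition entry (q : nat) := option 'I_q.
Definition star_matrix (q : nat) := seq (seq (entry q)).

Fixpoint ncols (q m : nat) : nat :=
  if m is m'.+1 then (1 + q * ncols q m')%N else 0.

(* The fractal matrix M_{q,m}, built by the recursive definition:
   blocks a = 0..q-1 in order; row of block a = a :: stripes, where stripe a
   is the corresponding row of M_{q,m-1} and other stripes are all stars. *)
Fixpoint fractal (q m : nat) : star_matrix q :=
  match m with
  | 0 => [:: [::]]
  | m'.+1 =>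
      flatten [seq [seq Some a :: flatten [seq (if b == a then r
                                                 else nseq (ncols q m') None)
                                           | b <- enum 'I_q]
                   | r <- fractal q m']
              | a <- enum 'I_q]
  end.

Definition in_subcube (q n : nat) (r : seq (entry q)) (x : {ffun 'I_n -> 'I_q}) : bool :=
  [forall i : 'I_n, if nth None r i is Some a then x i == a else true].

Definition subcube_dim (q : nat) (r : seq (entry q)) : nat := count (pred1 None) r.

Definition is_partition_star_matrix (q n : nat) (M : star_matrix q) : Prop :=
  all (fun r => size r == n) M /\
  forall x : {ffun 'I_n -> 'I_q}, count (fun r => in_subcube r x) M = 1%N.

(* Main.v *)
Require Import Defs.
From mathcomp Require Import all_boot.
From mathcomp Require Import zify.
Set Implicit Arguments. Unset Strict Implicit.

Fixpoint fit {q} (r : seq (entry q)) (x : seq 'I_q) : bool :=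
  match r, x with
  | e :: r', b :: x' => (if e is Some a then a == b else true) && fit r' x'
  | _, _ => true
  end.

Lemma fit_nil q (r : seq (entry q)) : fit r [::] = true.
Proof. by case: r. Qed.

Lemma fit_cat q (r1 r2 : seq (entry q)) x :
  fit (r1 ++ r2) x = fit r1 (take (size r1) x) && fit r2 (drop (size r1) x).
Proof.
elim: r1 x => [|e r1 IH] [|b x] //=.
  by rewrite !fit_nil.
by rewrite IH andbA.
Qed.

Lemma fit_nseq q n (x : seq 'I_q) : fit (nseq n None) x = true.
Proof. by elim: n x => [|n IH] [|b x] //=. Qed.

Definition Fp q (a : 'I_q) N (r : seq (entry q)) (l : seq 'I_q) :=
  flatten [seq (if b == a then r else nseq N None) | b <- l].

Lemma fit_F q (a : 'I_q) N r l x : size r = N -> uniq l ->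
  fit (Fp a N r l) x = if a \in l then fit r (take N (drop (index a l * N) x)) else true.
Proof.
move=> sr; rewrite /Fp; elim: l x => [|b l IH] x //= /andP [bl ul].
rewrite fit_cat in_cons.
have -> : size (if b == a then r else nseq N None) = N.
  by case: (b == a); rewrite ?size_nseq.
case: (eqVneq b a) => [eab|ne] /=.
  subst b. by rewrite IH // (negbTE bl) andbT mul0n drop0.
rewrite fit_nseq /= IH //.
case: (a \in l) => //. by rewrite drop_drop mulSn addnC.
Qed.

Lemma sumn_const (T : eqType) (f : T -> nat) N (l : seq T) : (forall b, b \in l -> f b = N) ->
  sumn [seq f b | b <- l] = size l * N.
Proof.
elim: l => [|b l IH] //= H. rewrite H ?mem_head // IH // => c cl.
by apply: H; rewrite in_cons cl orbT.
Qed.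

Lemma sumn_bool T (P : pred T) l : sumn [seq nat_of_bool (P a) | a <- l] = count P l.
Proof. by elim: l => //= a l ->. Qed.

Lemma sumn_sel (T : eqType) (a : T) k N l : uniq l ->
  sumn [seq (if b == a then k else N) | b <- l] + N * (a \in l) = k * (a \in l) + N * size l.
Proof.
elim: l => [|b l IH] /=; first by rewrite !muln0.
case/andP => bl ul; rewrite in_cons.
case: (eqVneq b a) => [eab|ne] /=.
  subst b; move: (IH ul); rewrite (negbTE bl) /= => H. lia.
move: (IH ul). case: (a \in l) => /=; lia.
Qed.

Lemma fractal_rows q m r : r \in fractal q m.+1 ->
  exists a r0, r0 \in fractal q m /\ r = Some a :: Fp a (ncols q m) r0 (enum 'I_q).
Proof.
move=> /flattenP [s /mapP [a _ ->] /mapP [r0 r0in ->]].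
by exists a, r0.
Qed.

Lemma size_rows q m : all (fun r => size r == ncols q m) (fractal q m).
Proof.
elim: m => [|m IH] //=; apply/allP => r /fractal_rows [a [r0 [r0in ->]]].
rewrite /= /Fp size_flatten /shape -map_comp (@sumn_const _ _ (ncols q m)).
  by rewrite size_enum_ord add1n.
move=> b _ /=; case: (b == a); rewrite ?size_nseq //.
exact: (eqP (allP IH _ r0in)).
Qed.


Lemma ncols_ge q m : 0 < q -> m <= ncols q m.
Proof. move=> q0; elim: m => //= m IH. nia. Qed.

Lemma dim_rows q m : 0 < q -> all (fun r => subcube_dim r == ncols q m - m) (fractal q m).
Proof.
move=> q0; elim: m => [|m IH] //=; apply/allP => r /fractal_rows [a [r0 [r0in ->]]].
rewrite /subcube_dim /= /Fp count_flatten -map_comp.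
have d0 : count (pred1 None) r0 = ncols q m - m by exact: (eqP (allP IH _ r0in)).
have := @sumn_sel _ a (ncols q m - m) (ncols q m) (enum 'I_q) (enum_uniq _).
rewrite mem_enum size_enum_ord /= !muln1.
have -> : [seq count (pred1 None) (if b == a then r0 else nseq (ncols q m) None) | b <- enum 'I_q]
   = [seq (if b == a then ncols q m - m else ncols q m) | b <- enum 'I_q].
  apply: eq_map => b; case: (b == a) => //.
  by rewrite count_nseq /= mul1n.
move=> h; have := ncols_ge m q0; move=> h2; apply/eqP. rewrite mulnC in h. have h3 : ncols q m <= q * ncols q m by rewrite leq_pmull. set S := sumn _ in h *. clearbody S. lia.
Qed.

Lemma count_main q m (x : seq 'I_q) : size x = ncols q m ->
  count (fun r => fit r x) (fractal q m) = 1.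
Proof.
elim: m x => [|m IH] x //=.
case: x => [|c x] //= [sx].
rewrite count_flatten -map_comp.
have -> : [seq (count (fun r => fit r (c :: x)) \o
     (fun a : 'I_q => [seq Some a :: flatten [seq (if b == a then r else nseq (ncols q m) None) | b <- enum 'I_q] | r <- fractal q m])) a | a <- enum 'I_q]
   = [seq nat_of_bool (a == c) | a <- enum 'I_q].
  apply: eq_map => a /=; rewrite count_map.
  have chunk : size (take (ncols q m) (drop (index a (enum 'I_q) * ncols q m) x)) = ncols q m.
    rewrite size_takel // size_drop sx index_enum_ord.
    have : a.+1 * ncols q m <= q * ncols q m by rewrite leq_mul2r ltn_ord orbT.
    rewrite mulSn. lia.
  case: (eqVneq a c) => [<-|ne] /=.
    rewrite -(IH _ chunk); apply: eq_in_count => r rin /=.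
    rewrite eqxx /=.
    have := fit_F a x (eqP (allP (size_rows q m) _ rin)) (enum_uniq 'I_q).
    by rewrite /Fp mem_enum => ->.
  apply/eqP; rewrite -leqn0 leqNgt -has_count; apply/hasP => -[r _] /=.
  by rewrite (negbTE ne).
by rewrite sumn_bool (count_uniq_mem _ (enum_uniq 'I_q)) mem_enum.
Qed.

Lemma ncols_eq q m : 1 <= q -> (q - 1) * ncols q m + 1 = q ^ m.
Proof.
move=> q1; elim: m => [|m IH] /=; first by rewrite muln0.
rewrite expnS -IH. case: q q1 {IH} => [|p] // _. rewrite subn1 /=. nia.
Qed.

Lemma ncols_div q m : 2 <= q -> (q ^ m - 1) %/ (q - 1) = ncols q m.
Proof.
move=> q2; rewrite -(ncols_eq m (ltnW q2)) addnK mulKn //. lia.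
Qed.

Lemma size_fractal q m : size (fractal q m) = q ^ m.
Proof.
elim: m => [|m IH] //=. rewrite size_flatten /shape -map_comp.
rewrite (@sumn_const _ _ (q ^ m)); first by rewrite size_enum_ord expnS.
by move=> a _ /=; rewrite size_map.
Qed.

Lemma fit_nth q (r : seq (entry q)) xs d : size r = size xs ->
  fit r xs = all (fun i => if nth None r i is Some a then nth d xs i == a else true)
               (iota 0 (size r)).
Proof.
elim: r xs => [|e r IH] [|b xs] //= [sz].
rewrite IH // (iotaDl 1 0) all_map /=.
case: e => [a|] //=; by rewrite eq_sym.
Qed.

Lemma in_subcube_fit q n (r : seq (entry q)) (x : {ffun 'I_n -> 'I_q}) (d : 'I_q) :
  size r = n -> in_subcube r x = fit r [seq x i | i <- enum 'I_n].
Proof.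
move=> sr; rewrite (fit_nth d); last by rewrite size_map size_enum_ord.
rewrite sr; apply/forallP/allP => [H j | H i].
  rewrite mem_iota add0n => /andP [_ jn].
  have := H (Ordinal jn). rewrite (nth_map (Ordinal jn)) ?size_enum_ord //.
  by rewrite (nth_ord_enum _ (Ordinal jn)).
have := H i; rewrite mem_iota add0n ltn_ord => /(_ isT).
by rewrite (nth_map i) ?size_enum_ord // nth_ord_enum.
Qed.

Theorem mainTheorem7 (q m : nat) (hq : 2 <= q) (hm : 1 <= m) :
  @is_partition_star_matrix q ((q ^ m - 1) %/ (q - 1)) (fractal q m) /\
  size (fractal q m) = q ^ m /\
  all (fun r => @subcube_dim q r == (q ^ m - 1) %/ (q - 1) - m) (fractal q m).
Proof.
have q0 : 0 < q by apply: ltnW.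
rewrite ncols_div //; split; last split.
- split; first exact: size_rows.
  move=> x; rewrite -(@count_main q m [seq x i | i <- enum 'I_(ncols q m)]).
    apply: eq_in_count => r rin.
    exact: (in_subcube_fit x (Ordinal q0) (eqP (allP (size_rows q m) _ rin))).
  by rewrite size_map size_enum_ord.
- exact: size_fractal.
- exact: dim_rows.
Qed.
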